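(* Let $M$ be the set consisting of the empty composition together with all Fibonacci compositions of multiples of $3$ that start with a part $1$; it is a free monoid under concatenation. Give a composition of $3n$ weight $n$. Then the number of primes of $M$ of weight $n$ is the coefficient of $x^n$ in $\dfrac{2x}{1-2x-x^2}$ (i.e. $a_0=0$, $a_1=2$, $a_n=2a_{n-1}+a_{n-2}$ for $n\ge2$), and consequently $$1+\sum_{n\ge1}F_{3n}x^n=1+\frac{2x}{1-4x-x^2}=\Bigl(1-\frac{2x}{1-2x-x^2}\Bigr)^{-1}.$$
   Context: A Fibonacci composition of $N$ is a sequence of parts each equal to $1$ or $2$ with sum $N$. A free monoid is one in which every element factors uniquely as a product of primes (nonempty elements not expressible as a product of two nonempty elements of the monoid). Fibonacci numbers: $F_0=0$, $F_1=1$, $F_n=F_{n-1}+F_{n-2}$. *)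

(* Defs.v *)
From mathcomp Require Import all_boot.
Set Implicit Arguments. Unset Strict Implicit. Unset Printing Implicit Defensive.

Fixpoint fib (n : nat) : nat :=
  match n with
  | 0 => 0
  | 1 => 1
  | (m.+1 as k).+1 => fib k + fib m
  end.

Definition fib_comp (c : seq nat) : bool := all (fun p => (p == 1) || (p == 2)) c.

Definition inM (c : seq nat) : bool :=
  (c == [::]) || [&& fib_comp c, 3 %| sumn c & head 0 c == 1].

Definition weight (c : seq nat) : nat := sumn c %/ 3.

Definition Mprime (c : seq nat) : Prop :=
  inM c /\ c <> [::] /\
  ~ (exists u v, [/\ inM u, inM v, u <> [::], v <> [::] & c = u ++ v]).

(* a_n = coefficient of x^n in 2x/(1-2x-x^2). *)
Fixpoint acoef (n : nat) : nat :=
  match n with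
  | 0 => 0
  | 1 => 2
  | (m.+1 as k).+1 => 2 * acoef k + acoef m
  end.

(* g_n = coefficient of x^n in 2x/(1-4x-x^2). *)
Fixpoint gcoef (n : nat) : nat :=
  match n with
  | 0 => 0
  | 1 => 2
  | (m.+1 as k).+1 => 4 * gcoef k + gcoef m
  end.

Definition ccoef (n : nat) : nat := if n == 0 then 1 else fib (3 * n).

(* Main.v *)
Require Import Defs.
From mathcomp Require Import all_boot zify.
From Stdlib Require Import Classical.
Set Implicit Arguments. Unset Strict Implicit.

Lemma fib_SS k : fib k.+2 = fib k.+1 + fib k.
Proof. by []. Qed.

Lemma fib6 k : fib (k + 6) = 4 * fib (k + 3) + fib k.
Proof.
rewrite !addnS !addn0 !fib_SS. lia.
Qed.

Lemma gcoef_SS n : gcoef n.+2 = 4 * gcoef n.+1 + gcoef n.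
Proof. by []. Qed.
Lemma acoef_SS n : acoef n.+2 = 2 * acoef n.+1 + acoef n.
Proof. by []. Qed.

Lemma fib_gcoef n : fib (3 * n) = gcoef n.
Proof.
elim: n {-2}n (leqnn n) => [|m IH] n Hn.
  by move: Hn; rewrite leqn0 => /eqP ->.
case: n Hn => [|[|n]] Hn //.
rewrite gcoef_SS -!IH; last by lia. 2: by lia.
have -> : 3 * n.+2 = 3 * n + 6 by lia.
have -> : 3 * n.+1 = 3 * n + 3 by lia.
exact: fib6.
Qed.

Definition Sconv n := \sum_(0 <= k < n.+1) acoef k * ccoef (n - k).

Lemma S_SS n : Sconv n.+2 = 2 * ccoef n.+1 + 2 * Sconv n.+1 + Sconv n.
Proof.
rewrite /Sconv big_nat_recl // big_nat_recl //.
rewrite [in 2 * _ + _]big_nat_recl //.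
under eq_bigr do rewrite acoef_SS mulnDl -mulnA subSS.

rewrite big_split -big_distrr.
have -> : acoef 0 = 0 by [].
have -> : acoef 1 = 2 by [].
rewrite !mul0n !add0n subn1.
have -> : n.+2.-1 = n.+1 by []. rewrite -addnA; congr (_ + _); congr (_ + _).
Qed.

Lemma S_g n : Sconv n = gcoef n.
Proof.
elim: n {-2}n (leqnn n) => [|m IH] n Hn.
  by move: Hn; rewrite leqn0 => /eqP ->; rewrite /Sconv big_nat1.
case: n Hn => [|[|n]] Hn.
- by rewrite /Sconv big_nat1.
- by rewrite /Sconv big_nat_recl // big_nat1.
rewrite S_SS gcoef_SS !IH; try lia.
have -> : ccoef n.+1 = gcoef n.+1 by rewrite -fib_gcoef. lia.
Qed.

Lemma inM_cat u v : inM u -> inM v -> inM (u ++ v).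
Proof.
case: u => [//|a u]; case: v => [|b v]; first by rewrite cats0.
rewrite /inM /= => /and3P[Hu Hu3 Hu1] /and3P[Hv Hv3 Hv1].
apply/and3P; split => //.
- rewrite /fib_comp all_cat. by move: Hu Hv; rewrite /fib_comp /= => /andP[-> ->] /andP[-> ->].
- rewrite sumn_cat /=. move: Hu3 Hv3. lia.
Qed.

Lemma inM_cons c : inM c -> c <> [::] -> exists w, c = 1 :: w /\ fib_comp w /\ 3 %| (1 + sumn w).
Proof.
case: c => [//|a w]; rewrite /inM /= => /and3P[/andP[Ha Hw] H3 /eqP Ha1] _.
subst a. by exists w.
Qed.

Lemma prime_head f : Mprime f -> exists w, f = 1 :: w.
Proof. case=> H1 [H2 _]. case: (inM_cons H1 H2) => w [-> _]. by exists w. Qed.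

Lemma exist_fact c : inM c -> exists fs : seq (seq nat),
       (forall f, f \in fs -> Mprime f) /\ flatten fs = c.
Proof.
elim: c {-2}c (leqnn (size c)) => [|m IH] c; last first.
Abort.

Lemma exist_fact_aux n c : size c <= n -> inM c -> exists fs : seq (seq nat),
       (forall f, f \in fs -> Mprime f) /\ flatten fs = c.
Proof.
elim: n c => [|m IH] c Hs Hc.
  move: Hs; rewrite leqn0 => /nilP ->. by exists [::].
case: (classic (c = [::])) => [->|Hne]; first by exists [::].
case: (classic (Mprime c)) => Hp.
  exists [:: c]; split; last by rewrite /= cats0.
  by move=> f; rewrite inE => /eqP ->.
have : exists u v, [/\ inM u, inM v, u <> [::], v <> [::] & c = u ++ v].
  apply: NNPP => Hn. by apply: Hp.
case=> u [v [Hu Hv Hu0 Hv0 Hc']].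
have Hsz : size c = size u + size v by rewrite Hc' size_cat.
have Hu1 : 0 < size u by case: u Hu0 {Hu Hc' Hsz}.
have Hv1 : 0 < size v by case: v Hv0 {Hv Hc' Hsz}.
case: (IH u) => //; first by lia.
case: (IH v) => //; first by lia.
move=> gs [Hg Hgv] fs [Hf Hfu].
exists (fs ++ gs); split; last by rewrite flatten_cat Hfu Hgv.
move=> f; rewrite mem_cat => /orP[]; [exact: Hf | exact: Hg].
Qed.

Lemma flatten_head fs : (forall f, f \in fs -> Mprime f) ->
  flatten fs = [::] \/ head 0 (flatten fs) = 1.
Proof.
case: fs => [|f fs] H; first by left.
right. case: (prime_head (H f (mem_head _ _))) => w ->. by [].
Qed.

Lemma no_shorter f g X Y fs : Mprime f -> Mprime g -> (forall h, h \in fs -> Mprime h) ->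
  X = flatten fs -> f ++ X = g ++ Y -> size f < size g -> False.
Proof.
move=> Hf Hg Hfs HX Heq Hlt.
set w := take (size g - size f) X.
have Hgw : g = f ++ w.
  have : take (size g) (g ++ Y) = g by rewrite take_size_cat.
  by rewrite -Heq take_cat ltnNge (ltnW Hlt) /= => <-.
have Hw0 : w <> [::].
  move=> Hw; move: Hgw; rewrite Hw cats0 => Hgf; move: Hlt; by rewrite Hgf ltnn.
have HXw : X = w ++ drop (size g - size f) X by rewrite cat_take_drop.
have Hwh : head 0 w = 1.
  case: (flatten_head Hfs); rewrite -HX => HXe.
    by move: Hw0; rewrite /w HXe.
  move: HXe; rewrite HXw. by case: (w) Hw0.
case: Hg => Hg [Hg0 Hg1]; apply: Hg1.
exists f, w; split => //.
- by case: Hf.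
- case: Hf => Hf [Hf0 _].
  case: (inM_cons Hf Hf0) => a [Ha [Ha1 Ha3]].
  case: (inM_cons Hg Hg0) => b [Hb [Hb1 Hb3]].
  have Hab : b = a ++ w by move: Hgw; rewrite Hb Ha => -[].
  apply/orP; right; apply/and3P; split => //.
  + by move: Hb1; rewrite Hab /fib_comp all_cat => /andP[].
  + move: Hb3; rewrite Hab sumn_cat. move: Ha3. lia.
  + by apply/eqP.
- by case: Hf => _ [].
Qed.

Lemma unique_fact fs gs :
  (forall f, f \in fs -> Mprime f) -> (forall g, g \in gs -> Mprime g) ->
  flatten fs = flatten gs -> fs = gs.
Proof.
elim: fs gs => [|f fs IH] [|g gs] //= Hf Hg Heq.
- case: (prime_head (Hg g (mem_head _ _))) => w Hw. by move: Heq; rewrite Hw.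
- case: (prime_head (Hf f (mem_head _ _))) => w Hw. by move: Heq; rewrite Hw.
have Hfs : forall h, h \in fs -> Mprime h by move=> h Hh; apply: Hf; rewrite inE Hh orbT.
have Hgs : forall h, h \in gs -> Mprime h by move=> h Hh; apply: Hg; rewrite inE Hh orbT.
have Pf := Hf f (mem_head _ _). have Pg := Hg g (mem_head _ _).
have Hsz : size f = size g.
  case: (ltngtP (size f) (size g)) => // H.
  - by case: (no_shorter Pf Pg Hfs erefl Heq H).
  - by case: (no_shorter Pg Pf Hgs erefl (esym Heq) H).
move/eqP: Heq; rewrite eqseq_cat // => /andP[/eqP -> /eqP H].
by rewrite (IH gs Hfs Hgs H).
Qed.

Fixpoint acc (s : nat) (w : seq nat) : bool :=
  match w with
  | [::] => s == 0
  | p :: w' => if s == 0 then (p == 2) && acc 2 w' else acc ((s + p) %% 3) w'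
  end.

Definition P s w := (s + sumn w) %% 3 = 0 /\
  forall x y, w = x ++ y -> y <> [::] -> (s + sumn x) %% 3 = 0 -> head 0 y = 2.

Lemma acc_char w s : s < 3 -> fib_comp w -> acc s w <-> P s w.
Proof.
elim: w s => [|p w IH] s Hs Hw.
  rewrite /P /=; split.
  - move=> /eqP ->; split => // x y; case: x => [|a x] //= <- H; by case: H.
  - case=> H _; apply/eqP; lia.
move: Hw; rewrite /fib_comp /= -/(fib_comp w) => /andP[Hp Hw].
rewrite /=; case: eqP => Hs0.
- subst s; split.
  + case/andP => /eqP Hp2; subst p; move/(IH 2 erefl Hw) => [H1 H2]; split.
    * rewrite /=; lia.
    * case=> [|a x] y /=; first by move=> <-.
      case=> <- Hwxy Hy Hm; apply: (H2 x y Hwxy Hy); lia.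
  + case=> [H1 H2].
    have Hp2 : p = 2 by apply: (H2 [::] (p :: w)).
    subst p; apply/andP; split => //; apply/(IH 2 erefl Hw); split.
    * move: H1 => /=; lia.
    * move=> x y Hxy Hy Hm; apply: (H2 (2 :: x) y); rewrite ?Hxy //=; lia.
- have Hs' : (s + p) %% 3 < 3 by rewrite ltn_mod.
  rewrite (IH _ Hs' Hw); split.
  + case=> [H1 H2]; split.
    * move: H1 => /=; lia.
    * case=> [|a x] y /=.
        move=> _ _; lia.
      case=> <- Hwxy Hy Hm; apply: (H2 x y Hwxy Hy); lia.
  + case=> [H1 H2]; split.
    * move: H1 => /=; lia.
    * move=> x y Hxy Hy Hm; apply: (H2 (p :: x) y); rewrite ?Hxy //=; lia.
Qed.

Fixpoint comps (m : nat) : seq (seq nat) :=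
  match m with
  | 0 => [:: [::]]
  | 1 => [:: [:: 1]]
  | (k.+1 as m').+1 => map (cons 1) (comps m') ++ map (cons 2) (comps k)
  end.

Lemma comps_SS m : comps m.+2 = map (cons 1) (comps m.+1) ++ map (cons 2) (comps m).
Proof. by []. Qed.

Lemma mem_map_cons (q p : nat) w (l : seq (seq nat)) :
  (p :: w \in map (cons q) l) = (p == q) && (w \in l).
Proof.
apply/mapP/andP.
- by case=> x Hx [-> ->].
- by case=> /eqP -> Hw; exists w.
Qed.

Lemma nil_map_cons (q : nat) (l : seq (seq nat)) : ([::] \in map (cons q) l) = false.
Proof. by apply/mapP => -[]. Qed.

Lemma fib_comp0 w : fib_comp w -> sumn w = 0 -> w = [::].
Proof. case: w => // p w /= /andP[/orP[] /eqP -> _] //. Qed.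

Lemma mem_comps w m : (w \in comps m) = fib_comp w && (sumn w == m).
Proof.
elim: w m => [|p w IH] m.
  case: m => [|[|m]] //=. by rewrite mem_cat !nil_map_cons.
case: m => [|[|m]].
- rewrite /= inE /=. apply/esym/negbTE.
  rewrite /fib_comp /= -/(fib_comp w). apply/negP => /andP[/andP[/orP[] /eqP -> _]] //.
- rewrite /= inE /fib_comp /= -/(fib_comp w).
  apply/idP/idP.
  + case/eqP => -> ->. by [].
  + case/andP => /andP[/orP[] /eqP -> Hw] /eqP Hs.
    * rewrite (fib_comp0 Hw) //. move: Hs; lia.
    * exfalso; move: Hs; lia.
- rewrite comps_SS mem_cat !mem_map_cons !IH /fib_comp /= -/(fib_comp w).
  case: p => [|[|[|p]]] /=; case: (fib_comp w) => //=; rewrite ?andbF ?orbF //;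
    apply/eqP/eqP; lia.
Qed.

Lemma uniq_comps m : uniq (comps m).
Proof.
elim: m {-2}m (leqnn m) => [|k IH] m Hm.
  by move: Hm; rewrite leqn0 => /eqP ->.
case: m Hm => [|[|m]] Hm //.
rewrite comps_SS cat_uniq !map_inj_uniq ?IH //; try (by lia); try (by move=> ? ? []).
rewrite andbT /=. apply/hasPn => x /mapP [y _ ->].
by rewrite mem_map_cons.
Qed.

Definition A s m := count (acc s) (comps m).

Lemma count_map_cons q f (l : seq (seq nat)) :
  count f (map (cons q) l) = count (fun w => f (q :: w)) l.
Proof. by rewrite count_map. Qed.

Lemma A0 m : A 0 m.+2 = A 2 m.
Proof.
rewrite /A /= count_cat !count_map_cons /=.
rewrite (@eq_count _ _ pred0) ?count_pred0 //.
Qed.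

Lemma A1 m : A 1 m.+2 = A 2 m.+1 + A 0 m.
Proof. by rewrite /A /= count_cat !count_map_cons. Qed.

Lemma A2 m : A 2 m.+2 = A 0 m.+1 + A 1 m.
Proof. by rewrite /A /= count_cat !count_map_cons. Qed.

Fixpoint bcoef (n : nat) : nat :=
  match n with
  | 0 => 1
  | 1 => 1
  | (m.+1 as k).+1 => 2 * bcoef k + bcoef m
  end.

Lemma ab n : bcoef n.+1 = bcoef n + acoef n /\ acoef n.+1 = bcoef n.+1 + bcoef n.
Proof.
elim: n {-2}n (leqnn n) => [|k IH] n Hn.
  by move: Hn; rewrite leqn0 => /eqP ->.
case: n Hn => [|[|n]] Hn //.
have [H1 H2] := IH n.+1 Hn.
have [H3 H4] := IH n (ltnW Hn).
have -> : bcoef n.+3 = 2 * bcoef n.+2 + bcoef n.+1 by [].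
have -> : acoef n.+3 = 2 * acoef n.+2 + acoef n.+1 by [].
lia.
Qed.

Lemma Acount n : [/\ A 0 (3 * n) = bcoef n, A 2 (3 * n).+1 = bcoef n.+1 &
                     A 1 (3 * n).+2 = acoef n.+1].
Proof.
elim: n => [|n [H0 H2 H1]]; first by [].
have [E1 E2] := ab n.+1.
have -> : 3 * n.+1 = (3 * n).+3 by lia.
have F0 : A 0 (3 * n).+3 = bcoef n.+1 by rewrite A0.
have F2 : A 2 (3 * n).+4 = bcoef n.+2 by rewrite A2 F0 H1; lia.
have F1 : A 1 (3 * n).+4.+1 = acoef n.+2 by rewrite A1 F2 F0; lia.
by split.
Qed.

Lemma prime_char w : Mprime (1 :: w) <-> fib_comp w /\ P 1 w.
Proof.
split.
- case=> HM [_ Hnd].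
  case: (inM_cons HM (fun H => ltac:(discriminate H))) => w' [[<-] [Hw H3]].
  split => //; split; first by move: H3; lia.
  move=> x y Hxy Hy Hm.
  have Hy' : fib_comp y by move: Hw; rewrite Hxy /fib_comp all_cat => /andP[].
  case: y Hxy Hy Hm Hy' => [//|b y] Hxy _ Hm /andP[/orP[] /eqP Hb _] //.
  subst b; exfalso; apply: Hnd; exists (1 :: x), (1 :: y); split => //.
  + apply/orP; right; apply/and3P; split => //.
    * by move: Hw; rewrite Hxy /fib_comp all_cat /= => /andP[].
    * rewrite /=; lia.
  + apply/orP; right; apply/and3P; split => //.
    * by move: Hw; rewrite Hxy /fib_comp all_cat /= => /andP[_ H]; rewrite /=.
    * move: H3; rewrite Hxy sumn_cat /=; lia.
  + by rewrite Hxy.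
- case=> Hw [H1 H2]; split; last split => //.
  + apply/orP; right; apply/and3P; split => //; rewrite /=; lia.
  case=> u [v [Hu Hv Hu0 Hv0 Huv]].
  case: (inM_cons Hu Hu0) => x [Hx [_ Hx3]].
  case: (inM_cons Hv Hv0) => y [Hy _].
  move: Huv; rewrite Hx Hy /= => -[Hwxy].
  have := H2 x (1 :: y) Hwxy (fun H => ltac:(discriminate H)).
  move=> H; have := H ltac:(lia). by [].
Qed.

Definition ps n := map (cons 1) (filter (acc 1) (comps (3 * n).-1)).

Lemma ps_mem n c : c \in ps n <-> (Mprime c /\ weight c = n).
Proof.
split.
- case/mapP => w; rewrite mem_filter mem_comps => /andP[Hacc /andP[Hw /eqP Hs]] ->.
  have [HP1 HP2] := (acc_char (s := 1) erefl Hw).1 Hacc.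
  split; first by apply/prime_char.
  rewrite /weight /=; lia.
- case=> Hp Hwt.
  case: (prime_head Hp) => w Hc; subst c.
  have [Hw HP] := (prime_char w).1 Hp.
  apply/mapP; exists w => //.
  rewrite mem_filter mem_comps Hw /=.
  apply/andP; split; first by apply/(acc_char (s := 1) erefl Hw).
  case: HP => H1 _; move: Hwt; rewrite /weight /= => Hwt; apply/eqP; lia.
Qed.

Lemma ps_uniq n : uniq (ps n).
Proof. rewrite map_inj_uniq; [exact: filter_uniq (uniq_comps _)| by move=> ? ? []]. Qed.

Lemma ps_size n : size (ps n) = acoef n.
Proof.
rewrite size_map size_filter.
case: n => [|n]; first by [].
have -> : (3 * n.+1).-1 = (3 * n).+2 by lia.
by case: (Acount n).
Qed.

Theorem mainTheorem19 :
  (* M is a submonoid of the free monoid under concatenation ... *)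
  (inM [::] /\ forall u v, inM u -> inM v -> inM (u ++ v)) /\
  (* ... and it is free: every element factors uniquely into primes *)
  (forall c, inM c -> exists fs : seq (seq nat),
       (forall f, f \in fs -> Mprime f) /\ flatten fs = c) /\
  (forall fs gs : seq (seq nat),
       (forall f, f \in fs -> Mprime f) -> (forall g, g \in gs -> Mprime g) ->
       flatten fs = flatten gs -> fs = gs) /\
  (* the number of primes of M of weight n is a_n *)
  (forall n, exists ps : seq (seq nat),
       [/\ uniq ps,
           (forall c, c \in ps <-> (Mprime c /\ weight c = n)) &
           size ps = acoef n]) /\
  (* 1 + sum F_{3n} x^n = 1 + 2x/(1-4x-x^2) *)
  (forall n, 0 < n -> fib (3 * n) = gcoef n) /\
  (* 1 + sum F_{3n} x^n = (1 - 2x/(1-2x-x^2))^{-1}, i.e. C = 1 + A*C *)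
  (forall n, 0 < n -> ccoef n = \sum_(0 <= k < n.+1) acoef k * ccoef (n - k)).

Proof.
split; first by split; [by [] | exact: inM_cat].
split; first by move=> c Hc; exact: (@exist_fact_aux (size c) c).
split; first exact: unique_fact.
split.
  move=> n; exists (ps n); split; [exact: ps_uniq | exact: ps_mem | exact: ps_size].
split; first by move=> n _; exact: fib_gcoef.
move=> n Hn.
rewrite -/(Sconv n) S_g /ccoef.
case: n Hn => [//|n] _. by rewrite -fib_gcoef.
Qed.
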